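(* Let $P\subseteq\mathsf{Pos}(R)$, $\alpha\in\Sigma$, and let $T$ be the transition tree of $P$. Then: every $\odot$-live node is in $T$ and has its left child in $T$; every $\odot$-live node that $\odot$-dominates some node of $N^\odot(P,\alpha)$ is a branching node of $T$; and every node that weakly $\odot$-dominates a branching node of $T$ is itself a branching node of $T$.
   Context: A regular expression $R$ over $\Sigma$ is identified with its parse tree; $\odot$-nodes $v$ have children $\mathsf{left}(v),\mathsf{right}(v)$. Positions are the character-labeled leaves, $\mathsf{Pos}_\alpha$ those labeled $\alpha$. $\mathsf{first}(v)$, $\mathsf{last}(v)$ are the sets of positions occurring first/last in a sequence of positions generated by the subexpression rooted at $v$; $\mathsf{firstextent}(p)=\{v:p\in\mathsf{first}(v)\}$, $\mathsf{lastextent}(p)=\{v:p\in\mathsf{last}(v)\}$, extended to sets by union. $N^\odot(P,\alpha)$ is the set of $\odot$-nodes $v$ with $\mathsf{left}(v)\in\mathsf{lastextent}(P)$ and $\mathsf{right}(v)\in\mathsf{firstextent}(\mathsf{Pos}_\alpha)$. The transition tree $T$ of $P$ is the subtree induced by the nodes of $P$ and all their ancestors; a branching node of $T$ has two children in $T$. A node $v$ is $\odot$-live if $v$ is a $\odot$-node and $\mathsf{left}(v)\in\mathsf{lastextent}(P)$. A node $v$ is $\odot$-dominated by $u$ if $u$ is a proper ancestor of $v$ and $\mathsf{first}(\mathsf{right}(v))\subseteq\mathsf{first}(\mathsf{right}(u))$. A node $v$ of $T$ is weakly $\odot$-dominated by $u$ if $u$ is $\odot$-live, $u$ is a proper ancestor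 of $v$, and $\mathsf{first}(v)\subseteq\mathsf{first}(\mathsf{right}(u))$. *)

(* Defs.v *)
(* Regular expressions as parse trees;
   nodes are addressed by root-to-node paths (seq bool):
   child of node a is rcons a false (left / only child) or rcons a true (right). *)
From mathcomp Require Import all_boot.
Set Implicit Arguments. Unset Strict Implicit. Unset Printing Implicit Defensive.

Inductive regex (Sigma : Type) : Type :=
| Eps : regex Sigma
| Sym : Sigma -> regex Sigma
| Union : regex Sigma -> regex Sigma -> regex Sigma
| Concat : regex Sigma -> regex Sigma -> regex Sigma
| Star : regex Sigma -> regex Sigma.
Arguments Eps {Sigma}.

Definition addr := seq bool.

Fixpoint subexp (Sigma : Type) (r : regex Sigma) (a : addr) : option (regex Sigma) :=
  match a, r with
  | [::], _ => Some r
  | false :: a', Union r1 _ => subexp r1 a'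
  | true :: a', Union _ r2 => subexp r2 a'
  | false :: a', Concat r1 _ => subexp r1 a'
  | true :: a', Concat _ r2 => subexp r2 a'
  | false :: a', Star r1 => subexp r1 a'
  | _, _ => None
  end.

Definition node (Sigma : Type) (R : regex Sigma) (v : addr) : Prop :=
  subexp R v <> None.

Definition is_pos (Sigma : Type) (R : regex Sigma) (p : addr) : Prop :=
  exists x, subexp R p = Some (Sym x).
Definition Pos_of (Sigma : Type) (R : regex Sigma) (alpha : Sigma) (p : addr) : Prop :=
  subexp R p = Some (Sym alpha).

Definition is_concat (Sigma : Type) (R : regex Sigma) (v : addr) : Prop :=
  exists r1 r2, subexp R v = Some (Concat r1 r2).

Definition lchild (v : addr) : addr := rcons v false.
Definition rchild (v : addr) : addr := rcons v true.

(* gen r a w : the subexpression r, located at address a, generates the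
   sequence w of positions (given by their global addresses). *)
Inductive gen (Sigma : Type) : regex Sigma -> addr -> seq addr -> Prop :=
| gen_eps a : gen Eps a [::]
| gen_sym x a : gen (Sym x) a [:: a]
| gen_unionl r1 r2 a w : gen r1 (rcons a false) w -> gen (Union r1 r2) a w
| gen_unionr r1 r2 a w : gen r2 (rcons a true) w -> gen (Union r1 r2) a w
| gen_concat r1 r2 a w1 w2 :
    gen r1 (rcons a false) w1 -> gen r2 (rcons a true) w2 ->
    gen (Concat r1 r2) a (w1 ++ w2)
| gen_star0 r a : gen (Star r) a [::]
| gen_starS r a w1 w2 :
    gen r (rcons a false) w1 -> gen (Star r) a w2 -> gen (Star r) a (w1 ++ w2).

Definition firstpos (Sigma : Type) (R : regex Sigma) (v : addr) (p : addr) : Prop :=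
  exists r, subexp R v = Some r /\ exists w, gen r v (p :: w).
Definition lastpos (Sigma : Type) (R : regex Sigma) (v : addr) (p : addr) : Prop :=
  exists r, subexp R v = Some r /\ exists w, gen r v (rcons w p).

Definition firstextent (Sigma : Type) (R : regex Sigma) (Q : addr -> Prop) (v : addr) : Prop :=
  exists p, Q p /\ firstpos R v p.
Definition lastextent (Sigma : Type) (R : regex Sigma) (Q : addr -> Prop) (v : addr) : Prop :=
  exists p, Q p /\ lastpos R v p.

Definition Nodot (Sigma : Type) (R : regex Sigma) (P : addr -> Prop) (alpha : Sigma)
  (v : addr) : Prop :=
  is_concat R v /\ lastextent R P (lchild v) /\ firstextent R (Pos_of R alpha) (rchild v).

Definition proper_ancestor (u v : addr) : Prop :=
  exists s, s <> [::] /\ v = u ++ s.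

Definition in_T (Sigma : Type) (R : regex Sigma) (P : addr -> Prop) (v : addr) : Prop :=
  node R v /\ exists p, P p /\ exists s, p = v ++ s.

Definition branching (Sigma : Type) (R : regex Sigma) (P : addr -> Prop) (v : addr) : Prop :=
  in_T R P v /\ in_T R P (rcons v false) /\ in_T R P (rcons v true).

Definition odot_live (Sigma : Type) (R : regex Sigma) (P : addr -> Prop) (v : addr) : Prop :=
  is_concat R v /\ lastextent R P (lchild v).

Definition odot_dominated (Sigma : Type) (R : regex Sigma) (v u : addr) : Prop :=
  proper_ancestor u v /\ (forall p, firstpos R (rchild v) p -> firstpos R (rchild u) p).

Definition weakly_odot_dominated (Sigma : Type) (R : regex Sigma) (P : addr -> Prop)
  (v u : addr) : Prop :=
  in_T R P v /\ odot_live R P u /\ proper_ancestor u v /\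
  (forall p, firstpos R v p -> firstpos R (rchild u) p).

(* Main.v *)
Require Import Defs.
From mathcomp Require Import all_boot.

Lemma subexp_cat (Sigma : Type) (v s : addr) : forall (R r : regex Sigma),
  subexp R v = Some r -> subexp R (v ++ s) = subexp r s.
Proof.
elim: v => [|b v IH] R r; first by case: R => /= [|?|??|??|?] [<-].
by case: b; case: R => //= *; apply: IH.
Qed.

Lemma gen_prefix (Sigma : Type) (r : regex Sigma) a w :
  gen r a w -> forall x, x \in w -> exists s, x = a ++ s.
Proof.
elim => {r a w} //.
- move=> x a y; rewrite inE => /eqP ->; exists [::]; by rewrite cats0.
- move=> r1 r2 a w _ IH x /IH [s ->]; exists (false :: s); by rewrite -cats1 -catA.
- move=> r1 r2 a w _ IH x /IH [s ->]; exists (true :: s); by rewrite -cats1 -catA.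
- move=> r1 r2 a w1 w2 _ IH1 _ IH2 x; rewrite mem_cat => /orP [/IH1 [s ->]|/IH2 [s ->]].
  + exists (false :: s); by rewrite -cats1 -catA.
  + exists (true :: s); by rewrite -cats1 -catA.
- move=> r a w1 w2 _ IH1 _ IH2 x; rewrite mem_cat => /orP [/IH1 [s ->]|/IH2 //].
  exists (false :: s); by rewrite -cats1 -catA.
Qed.

Lemma gen_exists (Sigma : Type) (r : regex Sigma) : forall a, exists w, gen r a w.
Proof.
elim: r => [|x|r1 IH1 r2 IH2|r1 IH1 r2 IH2|r1 IH1] a.
- exists [::]; constructor.
- exists [:: a]; constructor.
- have [w H] := IH1 (rcons a false); exists w; by constructor.
- have [w1 H1] := IH1 (rcons a false); have [w2 H2] := IH2 (rcons a true).
  exists (w1 ++ w2); by constructor.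
- exists [::]; constructor.
Qed.

Lemma gen_nonempty (Sigma : Type) (r : regex Sigma) : forall a s x,
  subexp r s = Some (Sym x) -> exists w, gen r a w /\ w <> [::].
Proof.
elim: r => [|y|r1 IH1 r2 IH2|r1 IH1 r2 IH2|r1 IH1] a s x.
- by case: s => // -[].
- move=> _; exists [:: a]; split => //; constructor.
- case: s => // -[] s /= H.
  + have [w [Hw Hn]] := IH2 (rcons a true) _ _ H; exists w; split => //; exact: gen_unionr.
  + have [w [Hw Hn]] := IH1 (rcons a false) _ _ H; exists w; split => //; exact: gen_unionl.
- case: s => // -[] s /= H.
  + have [w [Hw Hn]] := IH2 (rcons a true) _ _ H.
    have [w1 H1] := @gen_exists _ r1 (rcons a false).
    exists (w1 ++ w); split; first by constructor.
    by case: w1 {H1} => //.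
  + have [w [Hw Hn]] := IH1 (rcons a false) _ _ H.
    have [w2 H2] := @gen_exists _ r2 (rcons a true).
    exists (w ++ w2); split; first by constructor.
    by case: w Hw Hn.
- case: s => // -[] s //= H.
  have [w [Hw Hn]] := IH1 (rcons a false) _ _ H.
  exists (w ++ [::]); split; first by apply: gen_starS => //; constructor.
  by rewrite cats0.
Qed.

Lemma cat_cancel (u A B : addr) : u ++ A = u ++ B -> A = B.
Proof. elim: u => //= c u IH [] /IH. done. Qed.

Lemma prefix_head (u s x y : addr) (b : bool) :
  s <> [::] -> (u ++ s) ++ x = u ++ b :: y -> exists s', s = b :: s'.
Proof.
move=> Hs; rewrite -catA => /cat_cancel.
case: s Hs => // c s' _ /= [-> _]; by exists s'.
Qed.

Theorem lemma6 (Sigma : Type) (R : regex Sigma) (P : addr -> Prop) (alpha : Sigma) :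
  (forall p, P p -> is_pos R p) ->
  (forall v, odot_live R P v -> in_T R P v /\ in_T R P (lchild v)) /\
  (forall u v, odot_live R P u -> Nodot R P alpha v -> odot_dominated R v u ->
     branching R P u) /\
  (forall u v, branching R P v -> weakly_odot_dominated R P v u -> branching R P u).
Proof.
move=> HP.
have part1 : forall v, odot_live R P v -> in_T R P v /\ in_T R P (lchild v).
  move=> v [[r1 [r2 Hv]] [p [Pp [r [Hr [w Hw]]]]]].
  have [s Hs] := @gen_prefix _ _ _ _ Hw p ltac:(by rewrite mem_rcons mem_head).
  split; split.
  - by rewrite /node Hv.
  - exists p; split => //; exists (false :: s); by rewrite Hs /lchild -cats1 -catA.
  - by rewrite /node Hr.
  - by exists p; split => //; exists s.
have rnode : forall u, is_concat R u -> node R (rchild u).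
  move=> u [r1 [r2 Hu]]; rewrite /node /rchild -cats1 (@subexp_cat _ _ [:: true] _ _ Hu) /=.
  by case: r2 Hu.
split => //; split.
- move=> u v Hl [_ [[p [Pp [r [Hr [w Hw]]]]] [q [_ [r' [Hr' [w' Hw']]]]]]] [[s [Hs0 Hvu]] Hsub].
  have [H1 H2] := part1 u Hl.
  split => //; split => //; split; first by apply: rnode; case: Hl.
  have [r'' [Hr'' [w'' Hw'']]] := Hsub q (ex_intro _ r' (conj Hr' (ex_intro _ w' Hw'))).
  have [t1 Ht1] := @gen_prefix _ _ _ _ Hw' q (mem_head q w').
  have [t2 Ht2] := @gen_prefix _ _ _ _ Hw'' q (mem_head q w'').
  move: Ht1 Ht2; rewrite /rchild -!cats1 Hvu => -> E.
  have [s' Hs'] := @prefix_head u s ([:: true] ++ t1) t2 true Hs0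
    ltac:(rewrite -!catA in E *; exact: E).
  have [t Ht] := @gen_prefix _ _ _ _ Hw p ltac:(by rewrite mem_rcons mem_head).
  exists p; split => //; exists (s' ++ false :: t).
  by rewrite Ht /lchild Hvu Hs' -!cats1 -!catA.
- move=> u v _ [[Hnv [p [Pp [s0 Hp]]]] [Hl [[s [Hs0 Hvu]] Hsub]]].
  have [H1 H2] := part1 u Hl.
  split => //; split => //; split; first by apply: rnode; case: Hl.
  have [x Hx] := HP p Pp.
  have [r Hr] : exists r, subexp R v = Some r by move: Hnv; rewrite /node; case: (subexp R v) => // r0 _; exists r0.
  move: Hx; rewrite Hp (@subexp_cat _ _ _ _ _ Hr) => Hx.
  have [[|q w] [Hw Hn]] := @gen_nonempty _ _ v _ _ Hx => //.
  have [r'' [Hr'' [w'' Hw'']]] := Hsub q (ex_intro _ r (conj Hr (ex_intro _ w Hw))).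
  have [t1 Ht1] := @gen_prefix _ _ _ _ Hw q (mem_head q w).
  have [t2 Ht2] := @gen_prefix _ _ _ _ Hw'' q (mem_head q w'').
  move: Ht1 Ht2; rewrite /rchild -!cats1 Hvu => -> E.
  have [s' Hs'] := @prefix_head u s t1 t2 true Hs0
    ltac:(rewrite -!catA in E *; exact: E).
  exists p; split => //; exists (s' ++ s0).
  by rewrite Hp Hvu Hs' -!catA.
Qed.
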